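(* The function $d\mapsto\sigma(d,n+1)$ is concave for $1\le d\le n+1$, i.e. $\sigma(d+1,n+1)-\sigma(d,n+1)\le\sigma(d,n+1)-\sigma(d-1,n+1)$ for all integers $1<d<n+1$.
   Context: Let $x_0\le x_1\le\cdots\le x_{n+1}$ be real numbers, and write $\{x\}=x-\lfloor x\rfloor$. Let $\pi=(\pi_0,\dots,\pi_{n+1})$ be the permutation of $\{0,1,\dots,n+1\}$ such that for all $0\le i<j\le n+1$, $\pi_i>\pi_j$ if and only if $(\{x_i\},-x_i,i)<(\{x_j\},-x_j,j)$ in lexicographic order. For a sequence of indices $s_0<s_1<\cdots<s_k$, a drop is a consecutive pair $(s_{h-1},s_h)$ with $\pi_{s_{h-1}}>\pi_{s_h}$. For integers $0\le d\le i\le n+1$, let $\sigma(d,i)$ be the maximum $h$ such that there exists a sequence of $h+2$ indices $0=s_0<s_1<\cdots<s_{h+1}=i$ with at most $d$ drops, and $\sigma(d,i)=-\infty$ if no such sequence exists. *)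

(* Defs.v *)
From HB Require Import structures.
From mathcomp Require Import all_boot all_order all_algebra.
From mathcomp Require Import fingroup perm reals.
Set Implicit Arguments. Unset Strict Implicit. Unset Printing Implicit Defensive.
Import Order.TTheory GRing.Theory Num.Theory.
Local Open Scope ring_scope.

(* Indices 0..N-1 are 'I_N; in the paper N = n+2 (indices 0..n+1). *)

Definition fract (R : realType) (r : R) : R := r - (Num.floor r)%:~R.

Definition key_lt (R : realType) (N : nat) (x : 'I_N -> R) (i j : 'I_N) : bool :=
  (fract (x i) < fract (x j)) ||
  ((fract (x i) == fract (x j)) &&
   ((- x i < - x j) || ((- x i == - x j) && (val i < val j)%N))).

Definition is_pi (R : realType) (N : nat) (x : 'I_N -> R) (p : {perm 'I_N}) : Prop :=
  forall i j : 'I_N, (val i < val j)%N ->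
    ((val (p j) < val (p i))%N = key_lt x i j).

Definition drops (N : nat) (p : {perm 'I_N}) (s : seq 'I_N) : nat :=
  count (fun ab : 'I_N * 'I_N => (val (p ab.2) < val (p ab.1))%N) (zip s (behead s)).

Definition admissible (N : nat) (p : {perm 'I_N}) (d i h : nat)
    (t : (h.+2).-tuple 'I_N) : bool :=
  [&& head 1%N (map val t) == 0%N, last 0%N (map val t) == i,
      sorted ltn (map val t) & (drops p t <= d)%N].

Definition achievable (N : nat) (p : {perm 'I_N}) (d i h : nat) : bool :=
  [exists t : (h.+2).-tuple 'I_N, admissible p d i t].

(* sigma(d,i): Some (max h) if some h is achievable, None (= -infinity) otherwise.
   Any achievable h satisfies h + 2 <= N (distinct indices), so h < N.+1
   loses nothing. *)
Definition sigma (N : nat) (p : {perm 'I_N}) (d i : nat) : option nat :=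
  if [exists h : 'I_N.+1, achievable p d i h]
  then Some (\max_(h < N.+1 | achievable p d i h) val h)
  else None.

(* Main.v *)
Require Import Defs.
From HB Require Import structures.
From mathcomp Require Import all_boot all_order all_algebra.
From mathcomp Require Import fingroup perm reals.
From mathcomp Require Import zify.
Import Order.TTheory GRing.Theory Num.Theory.
Set Implicit Arguments. Unset Strict Implicit. Unset Printing Implicit Defensive.

(* The concavity holds for every permutation p; the reals x
   only serve to define p, so the proof is purely combinatorial. *)
Lemma lex_lt (N a b r s : nat) : r < N -> s < N -> a * N + r < b * N + s ->
  (s < r) + a <= b.
Proof. move=> hr hs h. case: (ltnP s r) => /= hsr; nia. Qed.

Lemma mod_eq (N a b r s : nat) : r < N -> s < N -> a * N + r = b * N + s -> r = s.
Proof. move=> hr hs h. have := congr1 (fun x => x %% N) h. by rewrite /= !modnMDl !modn_small. Qed.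

Lemma last_filter (T : Type) (a : pred T) x s y : a (last x s) -> last y (filter a (x :: s)) = last x s.
Proof.
elim: s x y => [|z s IH] x y /=; first by move=> ->.
by move=> h; case: (a x) => /=; rewrite IH.
Qed.

Section S.
Variables (n : nat) (p : {perm 'I_n.+2}).
Local Notation N := n.+2.
Definition q (u : 'I_N) : nat := val (p u).
Definition ltv (u v : 'I_N) := (val u < val v)%N.
Definition phi (l : 'I_N -> nat) u := (l u * N + q u)%N.
Definition mono (f : 'I_N -> nat) (s : seq 'I_N) :=
  forall u v, u \in s -> v \in s -> (val u < val v)%N -> (f u < f v)%N.

Lemma ltv_trans : transitive ltv.
Proof. by move=> y x z; rewrite /ltv; apply: ltn_trans. Qed.

Lemma drops_cons2 x y s : drops p [:: x, y & s] = ((q y < q x) + drops p (y :: s))%N.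
Proof. by []. Qed.

Lemma qN u : (q u < N)%N. Proof. exact: ltn_ord. Qed.

Lemma q_inj u v : q u = q v -> u = v.
Proof. by move/val_inj/perm_inj. Qed.

Lemma levels s x : pairwise ltv (x :: s) ->
  exists l : 'I_N -> nat, [/\ l x = 0%N, mono (phi l) (x :: s) & (l (last x s) <= drops p (x :: s))%N].
Proof.
elim: s x => [|y s IH] x.
  move=> _; exists (fun _ => 0%N); split => //.
  by move=> u v; rewrite !inE => /eqP -> /eqP ->; rewrite ltnn.
rewrite pairwise_cons => /andP [hx hys].
have [l [ly hm hl]] := IH y hys.
have xy : (val x < val y)%N by move: hx => /= /andP [].
have hxs : forall u, u \in y :: s -> (val x < val u)%N by move=> u hu; apply: (allP hx).
have hys' : forall u, u \in y :: s -> (phi l y <= phi l u)%N.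
  move=> u hu; case: (eqVneq u y) => [->//|uy]; apply: ltnW; apply: hm => //.
  by rewrite inE eqxx.
  move: hys; rewrite pairwise_cons => /andP [/allP hy _]; apply: hy.
  by move: hu; rewrite inE (negbTE uy).
set c := (q y < q x)%N.
exists (fun u => if u == x then 0%N else (l u + c)%N); split.
- by rewrite eqxx.
- move=> u v hu hv huv.
  case: (eqVneq u x) => [ux|ux]; case: (eqVneq v x) => [vx|vx].
  + by subst; rewrite ltnn in huv.
  + subst u. have hv' : v \in y :: s by move: hv; rewrite inE (negbTE vx).
    rewrite /phi eqxx (negbTE vx) mul0n add0n.
    have := qN x; rewrite /c; case: (ltnP (q y) (q x)) => hq hqx.
    * lia.
    * have := hys' v hv'; rewrite /phi ly mul0n add0n addn0 => hyv.
      have : q x != q y by apply/eqP => /q_inj exy; rewrite exy ltnn in xy.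
      lia.
  + subst v. have hu' : u \in y :: s by move: hu; rewrite inE (negbTE ux).
    by have := ltn_trans (hxs u hu') huv; rewrite ltnn.
  + have hu' : u \in y :: s by move: hu; rewrite inE (negbTE ux).
    have hv' : v \in y :: s by move: hv; rewrite inE (negbTE vx).
    have := hm u v hu' hv' huv; rewrite /phi (negbTE ux) (negbTE vx) !mulnDl; lia.
- have hl' : last x (y :: s) != x.
    by apply/eqP => /= e; have := hxs _ (mem_last y s); rewrite e ltnn.
  rewrite (negbTE hl') drops_cons2 /=; move: hl; rewrite /= => hl; lia.
Qed.

Lemma drops_bound l s x : pairwise ltv (x :: s) -> mono (phi l) (x :: s) ->
  (drops p (x :: s) + l x <= l (last x s))%N.
Proof.
elim: s x => [|y s IH] x; first by [].
rewrite [last _ _]/=.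
rewrite pairwise_cons => /andP [hx hys] hm.
have xy : (val x < val y)%N by move: hx => /= /andP [].
have hm' : mono (phi l) (y :: s).
  by move=> u v hu hv; apply: hm; rewrite inE ?hu ?hv orbT.
have := IH y hys hm'.
have hy : y \in x :: y :: s by rewrite inE mem_head orbT.
have hxy := hm x y (mem_head _ _) hy xy.
have := lex_lt (qN x) (qN y) hxy.
rewrite drops_cons2; lia.
Qed.


Lemma arith4 a b c e : (a + b + (c + (0 + e)) = a + e + (c + b))%N.
Proof. lia. Qed.

Lemma mono_sub f x s : mono f (x :: s) -> mono f s.
Proof. by move=> hm u v hu hv; apply: hm; rewrite inE ?hu ?hv orbT. Qed.

Lemma swap (d : nat) (z w : 'I_N) sC sA :
  val z = 0%N -> val w = n.+1 ->
  pairwise ltv (z :: sC) -> pairwise ltv (z :: sA) ->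
  last z sC = w -> last z sA = w ->
  (d < drops p (z :: sC) <= d.+1)%N -> (drops p (z :: sA) <= d.-1)%N -> (1 < d)%N ->
  exists X Y : seq 'I_N,
   [/\ pairwise ltv (z :: X), pairwise ltv (z :: Y), last z X = w & last z Y = w] /\
   [/\ (drops p (z :: X) <= d)%N, (drops p (z :: Y) <= d)%N &
       (size X + size Y = size sC + size sA)%N].
Proof.
move=> z0 wn pC pA lC lA /andP [dC1 dC2] dA d1.
have [lc [lcz mC lcw]] := levels pC.
have [la [laz mA law]] := levels pA.
have bC := drops_bound pC mC.
rewrite lC in lcw bC; rewrite lA in law.
have wC : w \in z :: sC by rewrite -lC mem_last.
have wA : w \in z :: sA by rewrite -lA mem_last.
have vle : forall u : 'I_N, (val u <= n.+1)%N by move=> u; have := ltn_ord u.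
set fC := phi lc.
set fA := fun u => ((la u).+1 * N + q u)%N.
have mA' : mono fA (z :: sA).
  by move=> u v hu hv huv; have := mA u v hu hv huv; rewrite /fA /phi !mulSn; lia.
pose P t := has (fun u => (val u <= t)%N && all (fun v => (val v <= t)%N ==> (fA v <= fC u)%N) (z :: sA)) (z :: sC).
have Pn : P n.+1.
  apply/hasP; exists w => //; rewrite (vle w) andTb; apply/allP => v hv; apply/implyP => _.
  have h1 : (fA v <= fA w)%N.
    case: (eqVneq v w) => [->//|vw]; apply: ltnW; apply: mA' => //.
    rewrite ltn_neqAle wn (vle v) andbT; apply: contra vw => /eqP e.
    by apply/eqP/val_inj; rewrite /= e wn.
  apply: (leq_trans h1); rewrite /fA /fC /phi.
  have : (la w <= d.-1)%N by apply: leq_trans law dA.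
  have : (d.+1 <= lc w)%N by apply: leq_trans bC; lia.
  move=> h2 h3.
  have h4 : ((la w).+1 * N <= lc w * N)%N by rewrite leq_mul2r; apply/orP; right; lia.
  lia.
case: (ex_minnP (ex_intro P n.+1 Pn)) => t0 Pt0 tmin.
have t0n : (t0 <= n.+1)%N by apply: tmin.
have t0pos : (0 < t0)%N.
  rewrite lt0n; apply/negP => /eqP e; move: Pt0; rewrite e /P.
  move=> /hasP [u hu /andP [u0 /allP hall]].
  have uz : u = z by apply/val_inj; rewrite /= z0; apply/eqP; rewrite -leqn0.
  have := hall z (mem_head _ _); rewrite z0 leqnn /= uz /fA /fC /phi laz lcz; lia.
set s := t0.-1.
have st0 : t0 = s.+1 by rewrite /s prednK.
have nPs : ~~ P s.
  by apply/negP => /tmin; rewrite st0 ltnn.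
have hnP : forall u, u \in z :: sC -> (val u <= s)%N ->
    exists2 v, v \in z :: sA & (val v <= s)%N && (fC u < fA v)%N.
  move=> u hu us; move/hasPn: nPs => /(_ u hu); rewrite us andTb => /allPn [v hv].
  by rewrite negb_imply -ltnNge => hh; exists v.
have [u0 u0C /andP [u0t /allP hu0]] := hasP Pt0.
have u0s : (s < val u0)%N.
  rewrite ltnNge; apply/negP => u0s.
  have [v hv /andP [vs hlt]] := hnP u0 u0C u0s.
  have := hu0 v hv; rewrite (leq_trans vs) ?st0 // => /= hle.
  by have := leq_ltn_trans hle hlt; rewrite ltnn.
have u0v : val u0 = s.+1 by apply/eqP; rewrite eqn_leq u0s andbT -st0.
pose le_s := fun u : 'I_N => (val u <= s)%N.
have ws : ~~ le_s w by rewrite /le_s -ltnNge wn; move: t0n; rewrite st0.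
have zs : le_s z by rewrite /le_s z0.
pose X := filter le_s sC ++ filter (predC le_s) (z :: sA).
pose Y := filter le_s sA ++ filter (predC le_s) (z :: sC).
have eX : z :: X = filter le_s (z :: sC) ++ filter (predC le_s) (z :: sA) by rewrite /= ifT.
have eY : z :: Y = filter le_s (z :: sA) ++ filter (predC le_s) (z :: sC) by rewrite /= ifT.
have pcat : forall s1 s2, pairwise ltv s1 -> pairwise ltv s2 ->
    pairwise ltv (filter le_s s1 ++ filter (predC le_s) s2).
  move=> s1 s2 h1 h2; rewrite pairwise_cat; apply/and3P; split; [|exact: pairwise_filter|exact: pairwise_filter].
  apply/allrelP => u v; rewrite !mem_filter /= /le_s => /andP [us _] /andP [vs _].
  by rewrite /ltv; apply: leq_ltn_trans us _; rewrite ltnNge.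
have lastX : last z X = w.
  rewrite /X last_cat -lA; apply: last_filter; by rewrite lA.
have lastY : last z Y = w.
  rewrite /Y last_cat -lC; apply: last_filter; by rewrite lC.
pose lX := fun u : 'I_N => if le_s u then lc u else (la u).+1.
pose lY := fun u : 'I_N => if le_s u then (la u).+1 else lc u.
have pX : pairwise ltv (z :: X) by rewrite eX; apply: pcat.
have pY : pairwise ltv (z :: Y) by rewrite eY; apply: pcat.
have mX : mono (phi lX) (z :: X).
  rewrite eX => u v; rewrite !mem_cat !mem_filter /= => hu hv huv.
  rewrite /phi /lX.
  case/orP: hu => /andP [hus hu]; case/orP: hv => /andP [hvs hv].
  - by rewrite hus hvs; apply: mC.
  - rewrite hus (negbTE hvs).
    have [v0 hv0 /andP [v0s hlt]] := hnP u hu hus.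
    apply: (ltn_trans hlt); apply: mA' => //.
    by apply: leq_ltn_trans v0s _; rewrite ltnNge.
  - move: hus hvs; rewrite /= /le_s -ltnNge => h1 h2.
    by have := leq_ltn_trans h2 (ltn_trans h1 huv); rewrite ltnn.
  - rewrite (negbTE hus) (negbTE hvs); exact: mA'.
have mY : mono (phi lY) (z :: Y).
  rewrite eY => u v; rewrite !mem_cat !mem_filter /= => hu hv huv.
  rewrite /phi /lY.
  case/orP: hu => /andP [hus hu]; case/orP: hv => /andP [hvs hv].
  - by rewrite hus hvs; apply: mA'.
  - rewrite hus (negbTE hvs).
    have h1 : (fA u <= fC u0)%N.
      by have := hu0 u hu; rewrite (leq_trans hus) // st0.
    have h2 : fA u != fC u0.
      apply/eqP => /mod_eq => /(_ (qN u) (qN u0)) /q_inj e.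
      by move: hus; rewrite /le_s e leqNgt u0s.
    have h3 : (fC u0 <= fC v)%N.
      case: (eqVneq v u0) => [->//|vu0]; apply: ltnW; apply: mC => //.
      rewrite ltn_neqAle u0v; rewrite /le_s -ltnNge in hvs; rewrite hvs andbT.
      by apply: contra vu0 => /eqP e; apply/eqP/val_inj; rewrite /= u0v e.
    change (fA u < fC v)%N; apply: (@leq_trans (fC u0)) => //.
    by rewrite ltn_neqAle h2 h1.
  - move: hus hvs; rewrite /= /le_s -ltnNge => h1 h2.
    by have := leq_ltn_trans h2 (ltn_trans h1 huv); rewrite ltnn.
  - rewrite (negbTE hus) (negbTE hvs); exact: mC.
have bX := drops_bound pX mX.
have bY := drops_bound pY mY.
rewrite lastX /lX (negbTE ws) in bX.
rewrite lastY /lY (negbTE ws) zs laz in bY.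
exists X, Y; split; split => //.
- apply: (leq_trans (leq_addr _ _) (leq_trans bX _)).
  rewrite -(prednK (ltnW d1)) ltnS; exact: leq_trans law dA.
- move: (leq_trans bY (leq_trans lcw dC2)) => /=; rewrite addn1 ltnS //.
- have c1 := count_predC le_s sC; have c2 := count_predC le_s sA.
  rewrite /X /Y !size_cat !size_filter /= zs /= add0n -c1 -c2.
  exact: arith4.
Qed.



Lemma sorted_pw l : sorted ltn (map val l) = pairwise ltv l.
Proof. rewrite sorted_map; exact: (sorted_pairwise ltv_trans). Qed.

Lemma ach_chain D h : achievable p D n.+1 h -> exists z s,
  [/\ val z = 0%N, pairwise ltv (z :: s), val (last z s) = n.+1,
      (drops p (z :: s) <= D)%N & size s = h.+1].
Proof.
move=> /existsP [t]; rewrite /admissible => /and4P [h0 hl hs hd].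
case: t h0 hl hs hd => [[|z s] sz] // h0 hl hs hd.
exists z, s; split.
- exact/eqP.
- by rewrite -sorted_pw.
- by move: hl; rewrite /= last_map => /eqP.
- exact: hd.
- by have /eqP [] := sz.
Qed.

Lemma chain_ach D z s : val z = 0%N -> pairwise ltv (z :: s) ->
  val (last z s) = n.+1 -> (drops p (z :: s) <= D)%N ->
  achievable p D n.+1 (size s).-1.
Proof.
case: s => [|y s] z0 pw hl hd; first by move: hl; rewrite /= z0.
apply/existsP; exists (in_tuple [:: z, y & s]).
rewrite /admissible /= z0 eqxx /=.
rewrite -[last _ _]/(last (val z) (map val (y :: s))) last_map hl eqxx /=.
apply/andP; split; last exact: hd.
by move: pw; rewrite -sorted_pw /= z0.
Qed.

Definition M D := \max_(h < N.+1 | achievable p D n.+1 h) val h.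

Lemma ach0 D : (0 < D)%N -> achievable p D n.+1 0.
Proof.
move=> hD.
have := @chain_ach D ord0 [:: ord_max] erefl _ erefl; apply => //.
rewrite drops_cons2 /drops /= addn0; case: (_ < _)%N => //.
Qed.

Lemma sigma_some D : (0 < D)%N -> sigma p D n.+1 = Some (M D).
Proof.
move=> hD; rewrite /sigma ifT //; apply/existsP; exists ord0; exact: ach0.
Qed.

Lemma ach_le D h : achievable p D n.+1 h -> (h <= M D)%N.
Proof.
move=> ha; have [z [s [z0 pw hl hd sz]]] := ach_chain ha.
have un : uniq (z :: s) by apply: (pairwise_uniq _ pw) => u; rewrite /ltv ltnn.
have : (size (z :: s) <= N)%N.
  by rewrite -(card_uniqP un); apply: leq_trans (max_card _) _; rewrite card_ord.
rewrite /= sz => hsz.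
have hlt : (h < N.+1)%N by apply: leq_trans (leqnSn _) (leqW hsz).
exact: (@leq_bigmax_cond _ (fun i : 'I_N.+1 => achievable p D n.+1 i) (fun i => val i) (Ordinal hlt)).
Qed.

Lemma M_ach D : (0 < D)%N -> achievable p D n.+1 (M D).
Proof.
move=> hD; rewrite /M (bigop.bigmax_eq_arg (ord0 : 'I_N.+1)); last exact: ach0.
by case: arg_maxnP => //; exact: ach0.
Qed.

End S.

Unset Implicit Arguments. Set Strict Implicit. Set Printing Implicit Defensive.

Lemma key (n : nat) (p : {perm 'I_n.+2}) (d : nat) (hd1 : (1 < d)%N) :
  (M p d.-1 + M p d.+1 <= M p d + M p d)%N.
Proof.
have hD1 : (0 < d.-1)%N by rewrite -subn1 subn_gt0.
have [zA [sA [zA0 pA lA dA szA]]] := ach_chain (M_ach p hD1).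
have [zC [sC [zC0 pC lC dC szC]]] := ach_chain (M_ach p (ltn0Sn d)).
case: (leqP (drops p (zC :: sC)) d) => hC.
  have h1 := ach_le (chain_ach zC0 pC lC hC).
  have h2 := ach_le (chain_ach zA0 pA lA (leq_trans dA (leq_pred d))).
  rewrite szC /= in h1; rewrite szA /= in h2.
  exact: leq_add h2 h1.
have ez : zA = zC by apply: val_inj; rewrite /= zA0 zC0.
subst zA.
have ew : last zC sA = last zC sC by apply: val_inj; rewrite /= lA lC.
have [X [Y [[pX pY lX lY] [dX dY sXY]]]] :=
  swap zC0 lC pC pA erefl ew (introT andP (conj hC dC)) dA hd1.
have lX' : val (last zC X) = n.+1 by rewrite lX.
have lY' : val (last zC Y) = n.+1 by rewrite lY.
have h1 := ach_le (chain_ach zC0 pX lX' dX).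
have h2 := ach_le (chain_ach zC0 pY lY' dY).
have nX : (0 < size X)%N.
  by case: X {pX lX dX sXY h1} lX' => //=; rewrite zC0.
have nY : (0 < size Y)%N.
  by case: Y {pY lY dY sXY h2} lY' => //=; rewrite zC0.
rewrite szC szA in sXY.
move: h1 h2 nX nY sXY.
move: (size X) (size Y) (M p d) (M p d.+1) (M p d.-1) => a b c e f.
clear; lia.
Qed.

Theorem lemma2 (R : realType) (n : nat) (x : 'I_n.+2 -> R)
  (hx : forall i j : 'I_n.+2, (val i <= val j)%N -> (x i <= x j)%R)
  (p : {perm 'I_n.+2}) (hp : is_pi x p)
  (d : nat) (hd1 : (1 < d)%N) (hd2 : (d < n.+1)%N) :
  exists a b c : nat,
    [/\ sigma p d.-1 n.+1 = Some a, sigma p d n.+1 = Some b,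
        sigma p d.+1 n.+1 = Some c &
        (c%:Z - b%:Z <= b%:Z - a%:Z)%R].
Proof.
have hD1 : (0 < d.-1)%N by rewrite -subn1 subn_gt0.
exists (M p d.-1), (M p d), (M p d.+1); split.
- exact: sigma_some.
- by apply: sigma_some; apply: ltnW.
- exact: sigma_some.
- have := @key n p d hd1.
  move: (M p d.-1) (M p d) (M p d.+1) => a b c h.
  clear -h; lia.
Qed.
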